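(* Let $\mathbb{H}$ denote the ring of real quaternions with its usual norm $|\cdot|$, let $B_d(1)=\{x\in\mathbb{H}:|x|<1\}$, and let $S$ be a dense subsemigroup of $(\mathbb{H},+)$ such that $S\cap B_d(1)\setminus\{0\}$ is a subsemigroup of $(B_d(1)\setminus\{0\},\cdot)$. Let $\langle x_n\rangle_{n=1}^\infty$ be a sequence in $S$ such that $\sum_{n=1}^\infty x_n$ converges to $0$, and let $A\subseteq S$ be an IP$^*$ set near $0$ in $S$. Then there exists a sum subsystem $\langle y_n\rangle_{n=1}^\infty$ of $\langle x_n\rangle_{n=1}^\infty$ such that \[FS(\langle y_n\rangle_{n=1}^\infty)\cup FP(\langle y_n\rangle_{n=1}^\infty)\subseteq A.\]
   Context: $FS(\langle y_n\rangle_{n=1}^\infty)=\{\sum_{n\in F}y_n: F\text{ a finite nonempty subset of }\mathbb{N}\}$. $FP(\langle y_n\rangle_{n=1}^\infty)$ is the set of all products of finitely many (at least one) terms of $\langle y_n\rangle_{n=1}^\infty$, taken in any order, with no repetitions (multiplication in $\mathbb{H}$ being noncommutative). A sequence $\langle y_n\rangle_{n=1}^\infty$ is a sum subsystem of $\langle x_n\rangle_{n=1}^\infty$ if there is a sequence $\langle H_n\rangle_{n=1}^\infty$ of nonempty finite subsets of $\mathbb{N}$ with $\max H_n<\min H_{n+1}$ and $y_n=\sum_{t\in H_n}x_t$ for each $n$. A subset $C$ of $S$ is an IP set near $0$ if there is a sequence $\langle z_n\rangle_{n=1}^\infty$ in $S$ with $\sum_{n=1}^\infty z_n$ convergent and $FS(\langle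 z_n\rangle_{n=1}^\infty)\subseteq C$. A subset $D$ of $S$ is an IP$^*$ set near $0$ if for every IP set near $0$ $C\subseteq S$, $C\cap D$ is an IP set near $0$. *)

(* Defs.v *)
From Stdlib Require Import Reals List.
Open Scope R_scope.

(** Real quaternions a + b i + c j + d k. *)
Record quat : Type := Quat { q0 : R; q1 : R; q2 : R; q3 : R }.

Definition qzero : quat := Quat 0 0 0 0.
Definition qone : quat := Quat 1 0 0 0.

Definition qadd (x y : quat) : quat :=
  Quat (q0 x + q0 y) (q1 x + q1 y) (q2 x + q2 y) (q3 x + q3 y).

Definition qopp (x : quat) : quat := Quat (- q0 x) (- q1 x) (- q2 x) (- q3 x).

Definition qsub (x y : quat) : quat := qadd x (qopp y).

(** Hamilton product (i^2 = j^2 = k^2 = ijk = -1). *)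
Definition qmul (x y : quat) : quat :=
  Quat (q0 x * q0 y - q1 x * q1 y - q2 x * q2 y - q3 x * q3 y)
       (q0 x * q1 y + q1 x * q0 y + q2 x * q3 y - q3 x * q2 y)
       (q0 x * q2 y - q1 x * q3 y + q2 x * q0 y + q3 x * q1 y)
       (q0 x * q3 y + q1 x * q2 y - q2 x * q1 y + q3 x * q0 y).

Definition qnorm (x : quat) : R :=
  sqrt (q0 x * q0 x + q1 x * q1 x + q2 x * q2 x + q3 x * q3 x).

Definition in_unit_ball (x : quat) : Prop := qnorm x < 1.

Fixpoint psum (z : nat -> quat) (n : nat) : quat :=
  match n with
  | O => qzero
  | S m => qadd (psum z m) (z m)
  end.

Definition series_cvg_to (z : nat -> quat) (L : quat) : Prop :=
  forall eps : R, 0 < eps ->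
    exists N : nat, forall n : nat, (N <= n)%nat -> qnorm (qsub (psum z n) L) < eps.

Definition series_cvg (z : nat -> quat) : Prop := exists L, series_cvg_to z L.

(** A finite nonempty subset of N, represented by a duplicate-free nonempty list. *)
Definition fin_ne (F : list nat) : Prop := F <> nil /\ NoDup F.

(** sum_{t in F} x t  and the product of the x t in the order listed in F. *)
Definition lsum (x : nat -> quat) (F : list nat) : quat :=
  fold_right (fun i acc => qadd (x i) acc) qzero F.
Definition lprod (x : nat -> quat) (F : list nat) : quat :=
  fold_right (fun i acc => qmul (x i) acc) qone F.

Definition FS (y : nat -> quat) : quat -> Prop :=
  fun a => exists F, fin_ne F /\ a = lsum y F.

(** FP(<y_n>): products of finitely many (>= 1) distinct terms, in any order. *)
Definition FP (y : nat -> quat) : quat -> Prop :=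
  fun a => exists F, fin_ne F /\ a = lprod y F.

Definition sum_subsystem (y x : nat -> quat) : Prop :=
  exists H : nat -> list nat,
    (forall n, fin_ne (H n)) /\
    (forall n a b, In a (H n) -> In b (H (S n)) -> (a < b)%nat) /\
    (forall n, y n = lsum x (H n)).

Definition qsubset (A B : quat -> Prop) : Prop := forall a, A a -> B a.

Definition IP_near0 (S C : quat -> Prop) : Prop :=
  qsubset C S /\
  exists z : nat -> quat,
    (forall n, S (z n)) /\ series_cvg z /\ qsubset (FS z) C.

Definition IPstar_near0 (S D : quat -> Prop) : Prop :=
  qsubset D S /\
  forall C, IP_near0 S C -> IP_near0 S (fun a => C a /\ D a).

Definition qdense (S : quat -> Prop) : Prop :=
  forall x eps, 0 < eps -> exists s, S s /\ qnorm (qsub x s) < eps.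

Definition add_subsemigroup (S : quat -> Prop) : Prop :=
  forall a b, S a -> S b -> S (qadd a b).

Definition mul_subsemigroup_ball (S : quat -> Prop) : Prop :=
  forall a b, S a -> in_unit_ball a -> a <> qzero ->
              S b -> in_unit_ball b -> b <> qzero ->
              S (qmul a b) /\ in_unit_ball (qmul a b) /\ qmul a b <> qzero.

(* Main.v *)
Require Import Defs.
From Stdlib Require Import Reals List Lia Lra Permutation Classical ClassicalEpsilon FunctionalExtensionality PropExtensionality.
From mathcomp Require classical_sets.

Section Abs.
Context {T : Type}.

Definition isFilter (F : (T -> Prop) -> Prop) : Prop :=
  F (fun _ => True) /\
  (forall A B, F A -> F B -> F (fun x => A x /\ B x)) /\
  (forall A B : T -> Prop, (forall x, A x -> B x) -> F A -> F B).
Definition proper (F : (T -> Prop) -> Prop) := isFilter F /\ ~ F (fun _ => False).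
Definition ultra (p : (T -> Prop) -> Prop) := proper p /\ forall A, p A \/ p (fun x => ~ A x).
Definition sub (F G : (T -> Prop) -> Prop) := forall A, F A -> G A.

Lemma fT F : isFilter F -> F (fun _ => True). Proof. intros [h _]; exact h. Qed.
Lemma fI F A B : isFilter F -> F A -> F B -> F (fun x => A x /\ B x).
Proof. intros [_ [h _]]; apply h. Qed.
Lemma fS F (A B : T -> Prop) : isFilter F -> (forall x, A x -> B x) -> F A -> F B.
Proof. intros [_ [_ h]]; apply h. Qed.

Lemma ultra_filter p : ultra p -> isFilter p. Proof. intros [[h _] _]; exact h. Qed.
Lemma ultra_ne p : ultra p -> ~ p (fun _ => False). Proof. intros [[_ h] _]; exact h. Qed.

Lemma ultra_ex p A : ultra p -> p A -> exists x, A x.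
Proof.
  intros U H; apply NNPP; intro N; apply (ultra_ne p U).
  apply (fS p A); [apply ultra_filter; auto| |auto].
  intros x Ax; apply N; eauto.
Qed.

Lemma ultra_not p A : ultra p -> ~ p A -> p (fun x => ~ A x).
Proof. intros [_ h] N; destruct (h A); tauto. Qed.

Lemma ultra_notb p A : ultra p -> p (fun x => ~ A x) -> ~ p A.
Proof.
  intros U H1 H2; apply (ultra_ne p U).
  apply (fS p (fun x => A x /\ ~ A x)); [apply ultra_filter; auto|tauto|].
  apply fI; auto; apply ultra_filter; auto.
Qed.

Lemma ultra_max p q : ultra p -> proper q -> sub p q -> sub q p.
Proof.
  intros U [Fq Nq] spq A qA; apply NNPP; intro N.
  apply ultra_not in N; auto. apply spq in N. apply Nq.
  apply (fS q (fun x => A x /\ ~ A x)); auto. tauto. apply fI; auto.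
Qed.

Lemma maxgood (Good : ((T -> Prop) -> Prop) -> Prop) G0 :
  Good G0 -> G0 (fun _ => True) ->
  (forall C : ((T -> Prop) -> Prop) -> Prop,
      (exists X, C X) -> (forall X, C X -> Good X) ->
      (forall X Y, C X -> C Y -> sub X Y \/ sub Y X) ->
      Good (fun A => exists X, C X /\ X A)) ->
  exists G, Good G /\ forall G', Good G' -> sub G G' -> sub G' G.
Proof.
  intros HG0 HT Hch.
  destruct (@classical_sets.Zorn_bigcup (T -> Prop)
     (fun X => Good X \/ X = (fun _ => False))) as [M [PM HM]].
  - intros F HF Htot.
    destruct (classic (exists X, F X /\ Good X)) as [[X0 [FX0 GX0]]|NX].
    + left.
      assert (E : classical_sets.bigcup F (fun X => X) =
                  (fun A => exists X, (F X /\ Good X) /\ X A)).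
      { apply functional_extensionality; intro A; apply propositional_extensionality.
        unfold classical_sets.bigcup, classical_sets.mkset; split.
        - intros [X FX XA]. exists X. destruct (HF X FX) as [g|e].
          + tauto.
          + subst X; destruct XA.
        - intros [X [[FX _] XA]]; exists X; auto. }
      rewrite E. apply Hch.
      * eauto.
      * intros X [_ h]; exact h.
      * intros X Y [FX _] [FY _]; apply (Htot X Y FX FY).
    + right. apply functional_extensionality; intro A; apply propositional_extensionality.
      unfold classical_sets.bigcup, classical_sets.mkset; split; [|tauto].
      intros [X FX XA]. destruct (HF X FX) as [g|e].
      * exfalso; apply NX; eauto.
      * subst X; destruct XA.
  - destruct PM as [GM|EM].
    + exists M; split; auto.
      intros G' HG' sMG' A G'A. apply NNPP; intro N.
      apply (HM G'); [split; [exact sMG'|] | left; exact HG'].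
      intro h; apply N; apply h; auto.
    + exfalso. subst M. apply (HM G0); [split|left; auto].
      * intros t f; destruct f.
      * intro h; apply (h _ HT).
Qed.

Lemma ultra_lemma F : proper F -> exists p, ultra p /\ sub F p.
Proof.
  intros PF.
  destruct (maxgood (fun G => proper G /\ sub F G) F) as [M [[PM sFM] HM]].
  - split; auto. intros A h; exact h.
  - apply fT, PF.
  - intros C [X0 CX0] HC Htot. split; [split; [split; [|split]|]|].
    + exists X0; split; auto. apply fT, (HC X0 CX0).
    + intros A B [X [CX XA]] [Y [CY YB]].
      destruct (Htot X Y CX CY) as [s|s].
      * exists Y; split; auto. apply fI; auto. apply (HC Y CY).
      * exists X; split; auto. apply fI; auto. apply (HC X CX).
    + intros A B AB [X [CX XA]]. exists X; split; auto. apply (fS X A); auto. apply (HC X CX).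
    + intros [X [CX XA]]. apply (HC X CX); auto.
    + intros A FA. exists X0; split; auto. apply (HC X0 CX0); auto.
  - exists M; split; auto. split; auto.
    intro A. destruct (classic (M A)) as [h|h]; [left; auto|right].
    apply NNPP; intro h2.
    set (G' := fun B => exists D, M D /\ forall x, D x /\ A x -> B x).
    assert (PG' : proper G' /\ sub F G').
    { destruct PM as [FM NM].
      split; [split; [split; [|split]|]|].
      - exists (fun _ => True); split; auto. apply fT; auto.
      - intros B1 B2 [D1 [M1 H1]] [D2 [M2 H2]]. exists (fun x => D1 x /\ D2 x); split.
        apply fI; auto. intros x [[a b] c]; auto.
      - intros B1 B2 H12 [D [MD HD]]. exists D; split; auto.
      - intros [D [MD HD]]. apply h2. apply (fS M D); auto.
        intros x Dx Ax; apply (HD x); auto.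
      - intros B FB. exists B; split; auto. tauto. }
    assert (sMG : sub M G').
    { intros B MB. exists B; split; auto. tauto. }
    apply h. apply (HM G' PG' sMG). exists (fun _ => True); split.
    apply fT, PM. tauto.
Qed.

Variable op : T -> T -> T.
Hypothesis op_assoc : forall a b c, op (op a b) c = op a (op b c).

Definition conv (p q : (T -> Prop) -> Prop) : (T -> Prop) -> Prop :=
  fun A => p (fun a => q (fun b => A (op a b))).

Lemma ultra_conv p q : ultra p -> ultra q -> ultra (conv p q).
Proof.
  intros Up Uq. pose proof (ultra_filter p Up) as Fp. pose proof (ultra_filter q Uq) as Fq.
  unfold conv; split; [split; [split; [|split]|]|].
  - apply (fS p (fun _ => True)); auto. intros; apply fT; auto. apply fT; auto.
  - intros A B HA HB. apply (fS p (fun a => q (fun b => A (op a b)) /\ q (fun b => B (op a b)))); auto.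
    intros a [h1 h2]; apply fI; auto. apply fI; auto.
  - intros A B AB HA. eapply (fS p _ _ Fp); [|exact HA]. intros a h. eapply (fS q _ _ Fq); [|exact h]. auto.
  - intro H. apply (ultra_ne p Up). eapply (fS p _ _ Fp); [|exact H]. intros a h. apply (ultra_ne q Uq h).
  - intros A. destruct (proj2 Up (fun a => q (fun b => A (op a b)))) as [h|h]; [left; auto|right].
    eapply (fS p _ _ Fp); [|exact h]. intros a h2. apply ultra_not; auto.
Qed.

Lemma conv_assoc p q r A : conv (conv p q) r A = conv p (conv q r) A.
Proof.
  unfold conv. f_equal. apply functional_extensionality; intro x. f_equal.
  apply functional_extensionality; intro y. f_equal.
  apply functional_extensionality; intro z. rewrite op_assoc; reflexivity.
Qed.

Definition equiv (p q : (T -> Prop) -> Prop) := forall A, p A <-> q A.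

Lemma conv_congr q q' r r' : equiv q q' -> equiv r r' ->
  equiv (conv q r) (conv q' r') .
Proof.
  intros Eq Er A. unfold conv. 
  assert (E : (fun a => r (fun b => A (op a b))) = (fun a => r' (fun b => A (op a b)))).
  { apply functional_extensionality; intro a; apply propositional_extensionality; apply Er. }
  rewrite E. apply Eq.
Qed.

Definition semi (F : (T -> Prop) -> Prop) :=
  forall p q, ultra p -> ultra q -> sub F p -> sub F q -> sub F (conv p q).

(* compactness: the image K+p is closed *)
Lemma closed_image G p r : isFilter G -> ultra p -> ultra r ->
  sub (fun A => forall q, ultra q -> sub G q -> conv q p A) r ->
  exists q, ultra q /\ sub G q /\ equiv r (conv q p).
Proof.
  intros FG Up Ur Hr. pose proof (ultra_filter p Up) as Fp. pose proof (ultra_filter r Ur) as Fr.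
  set (H := fun A => exists C D, G C /\ r D /\ forall x, C x /\ p (fun b => D (op x b)) -> A x).
  assert (PH : proper H).
  { split; [split; [|split]|].
    - exists (fun _ => True), (fun _ => True); repeat split; auto; apply fT; auto.
    - intros A B [C1 [D1 [G1 [R1 H1]]]] [C2 [D2 [G2 [R2 H2]]]].
      exists (fun x => C1 x /\ C2 x), (fun x => D1 x /\ D2 x).
      split; [apply fI; auto|]. split; [apply fI; auto|].
      intros x [[c1 c2] h]. split.
      + apply H1. split; [exact c1|]. revert h. apply (fS p _ _ Fp). tauto.
      + apply H2. split; [exact c2|]. revert h. apply (fS p _ _ Fp). tauto.
    - intros A B AB [C [D [GC [RD HD]]]]. exists C, D; repeat split; auto.
    - intros [C [D [GC [RD HD]]]].
      assert (h : r (fun x => ~ D x)).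
      { apply Hr. intros q Uq sGq. unfold conv.
        apply (fS q C); [apply ultra_filter; auto| |auto].
        intros x Cx. apply ultra_not; auto. intro h; apply (HD x); auto. }
      apply (ultra_notb r D Ur h RD). }
  destruct (ultra_lemma H PH) as [q [Uq sHq]].
  exists q; split; auto; split.
  - intros C GC. apply sHq. exists C, (fun _ => True); repeat split; auto. apply fT; auto. tauto.
  - assert (s : sub r (conv q p)).
    { intros D RD. apply sHq. exists (fun _ => True), D; repeat split; auto. apply fT; auto. tauto. }
    intro A; split; [apply s|]. apply (ultra_max r (conv q p)); auto.
    apply (ultra_conv q p Uq Up).
Qed.

Lemma idempotent F0 : proper F0 -> semi F0 ->
  exists p, ultra p /\ sub F0 p /\ forall A, conv p p A <-> p A.
Proof.
  intros PF0 SF0.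
  destruct (maxgood (fun G => proper G /\ sub F0 G /\ semi G) F0) as [G [[PG [sFG SG]] HG]].
  - split; [exact PF0|split; [intros A h; exact h|exact SF0]].
  - apply fT, PF0.
  - intros C [X0 CX0] HC Htot.
    assert (FU : isFilter (fun A => exists X, C X /\ X A)).
    { split; [|split].
      + exists X0; split; auto. apply fT, (HC X0 CX0).
      + intros A B [X [CX XA]] [Y [CY YB]].
        destruct (Htot X Y CX CY) as [s|s].
        * exists Y; split; auto. apply fI; auto. apply (HC Y CY).
        * exists X; split; auto. apply fI; auto. apply (HC X CX).
      + intros A B AB [X [CX XA]]. exists X; split; auto. apply (fS X A); auto. apply (HC X CX). }
    split; [split; auto|split].
    + intros [X [CX XA]]. apply (HC X CX); auto.
    + intros A FA. exists X0; split; auto. apply (HC X0 CX0); auto.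
    + intros p q Up Uq sp sq A [X [CX XA]].
      destruct (HC X CX) as [_ [_ SX]].
      apply (SX p q Up Uq); auto.
      * intros B XB; apply sp; eauto.
      * intros B XB; apply sq; eauto.
  - destruct PG as [FG NG].
    destruct (ultra_lemma G (conj FG NG)) as [p [Up sGp]].
    pose proof (ultra_filter p Up) as Fp.
    set (G' := fun A => forall q, ultra q -> sub G q -> conv q p A).
    assert (GG' : proper G' /\ sub F0 G' /\ semi G').
    { assert (FG' : isFilter G').
      { split; [|split].
        - intros q Uq _. apply fT, ultra_filter, ultra_conv; auto.
        - intros A B h1 h2 q Uq sq. apply fI; auto. apply ultra_filter, ultra_conv; auto.
        - intros A B AB h q Uq sq. apply (fS (conv q p) A); auto. apply ultra_filter, ultra_conv; auto. }
      split; [split; auto|split].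
      - intro h. apply (ultra_ne (conv p p)); auto. apply ultra_conv; auto.
      - intros A FA q Uq sq. apply (SG q p Uq Up sq sGp). apply sFG; auto.
      - intros r s Ur Us sr ss.
        destruct (closed_image G p r FG Up Ur sr) as [q1 [Uq1 [sq1 E1]]].
        destruct (closed_image G p s FG Up Us ss) as [q2 [Uq2 [sq2 E2]]].
        intros A G'A.
        set (q3 := conv (conv q1 p) q2).
        assert (Uq3 : ultra q3) by (apply ultra_conv; auto; apply ultra_conv; auto).
        assert (sq3 : sub G q3).
        { apply SG; auto. apply ultra_conv; auto. }
        pose proof (G'A q3 Uq3 sq3) as h.
        unfold q3 in h. rewrite conv_assoc in h.
        assert (e : equiv (conv r s) (conv (conv q1 p) (conv q2 p))).
        { apply conv_congr; [exact E1|exact E2]. }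
        apply e. exact h. }
    assert (sGG' : sub G G').
    { intros A GA q Uq sq. apply (SG q p Uq Up sq sGp); auto. }
    pose proof (HG G' GG' sGG') as sG'G.
    destruct (closed_image G p p FG Up Up (fun A h => sGp A (sG'G A h))) as [q0 [Uq0 [sq0 E0]]].
    set (G'' := fun A => forall q, ultra q -> sub G q -> equiv (conv q p) p -> q A).
    assert (clos : forall r, ultra r -> sub G'' r -> sub G r /\ equiv (conv r p) p).
    { intros r Ur sr. assert (sGr : sub G r).
      { intros A GA. apply sr. intros q Uq sq _. auto. }
      split; auto.
      assert (s : sub (conv r p) p).
      { intros B CB. apply NNPP; intro nB. apply ultra_not in nB; auto.
        assert (h : G'' (fun a => p (fun b => ~ B (op a b)))).
        { intros q Uq sq Eq. apply Eq in nB. exact nB. }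
        apply sr in h. apply (ultra_ne r Ur).
        apply (fS r (fun a => p (fun b => B (op a b)) /\ p (fun b => ~ B (op a b)))).
        apply ultra_filter; auto.
        intros a [h1 h2]. apply (ultra_notb p _ Up h2 h1).
        apply fI; auto. apply ultra_filter; auto. }
      intro A; split; [apply s|]. apply (ultra_max (conv r p) p); auto.
      apply ultra_conv; auto. apply Up. }
    assert (GG'' : proper G'' /\ sub F0 G'' /\ semi G'').
    { assert (FG'' : isFilter G'').
      { split; [|split].
        - intros q Uq _ _. apply fT, ultra_filter; auto.
        - intros A B h1 h2 q Uq sq e. apply fI; [apply ultra_filter; auto|apply h1; auto|apply h2; auto].
        - intros A0 B0 AB h q Uq sq e. apply (fS q A0); [apply ultra_filter; auto|auto|apply h; auto]. }
      split; [split; auto|split].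
      - intro h. apply (ultra_ne q0 Uq0). apply h; auto.
        intro A; split; intro hA; apply E0; auto.
      - intros A FA q Uq sq _. apply sq, sFG; auto.
      - intros r s Ur Us sr ss A HA.
        destruct (clos r Ur sr) as [sGr Er]. destruct (clos s Us ss) as [sGs Es].
        apply HA. apply ultra_conv; auto. apply SG; auto.
        intro B. rewrite conv_assoc.
        assert (e : equiv (conv r (conv s p)) (conv r p)).
        { apply conv_congr; [intro; tauto|exact Es]. }
        rewrite (e B). apply Er. }
    assert (sGG'' : sub G G'').
    { intros A GA q Uq sq _. auto. }
    pose proof (HG G'' GG'' sGG'') as sG''G.
    exists p; split; auto; split.
    + intros A h; apply sGp, sFG; auto.
    + destruct (clos p Up (fun A h => sGp A (sG''G A h))) as [_ E]. apply E.
Qed.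

End Abs.

Open Scope R_scope.

Ltac qeq := repeat match goal with q : quat |- _ => destruct q end; unfold qsub, qadd, qmul, qopp, qzero, qone; simpl; f_equal; ring.

Lemma qadd_assoc a b c : qadd (qadd a b) c = qadd a (qadd b c). Proof. qeq. Qed.
Lemma qadd_comm a b : qadd a b = qadd b a. Proof. qeq. Qed.
Lemma qadd_0_r a : qadd a qzero = a. Proof. qeq. Qed.
Lemma qadd_0_l a : qadd qzero a = a. Proof. qeq. Qed.
Lemma qmul_assoc a b c : qmul (qmul a b) c = qmul a (qmul b c). Proof. qeq. Qed.
Lemma qmul_1_l a : qmul qone a = a. Proof. qeq. Qed.
Lemma qmul_1_r a : qmul a qone = a. Proof. qeq. Qed.
Lemma qmul_0_l a : qmul qzero a = qzero. Proof. qeq. Qed.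
Lemma qmul_0_r a : qmul a qzero = qzero. Proof. qeq. Qed.
Lemma qmul_add_l a b c : qmul a (qadd b c) = qadd (qmul a b) (qmul a c). Proof. qeq. Qed.
Lemma qmul_add_r a b c : qmul (qadd b c) a = qadd (qmul b a) (qmul c a). Proof. qeq. Qed.
Lemma qsub_0 a : qsub a qzero = a. Proof. qeq. Qed.

Definition qN (x : quat) := q0 x * q0 x + q1 x * q1 x + q2 x * q2 x + q3 x * q3 x.
Lemma qN_ge0 x : 0 <= qN x. Proof. unfold qN; nra. Qed.
Lemma qnorm_ge0 x : 0 <= qnorm x. Proof. apply sqrt_pos. Qed.

Lemma qnorm_mul a b : qnorm (qmul a b) = qnorm a * qnorm b.
Proof.
  unfold qnorm. rewrite <- sqrt_mult_alt by (apply (qN_ge0 a)).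
  f_equal. destruct a, b; simpl; ring.
Qed.

Lemma qnorm_one : qnorm qone = 1.
Proof. unfold qnorm; simpl. replace (1*1+0*0+0*0+0*0) with 1 by ring. apply sqrt_1. Qed.
Lemma qnorm_zero : qnorm qzero = 0.
Proof. unfold qnorm; simpl. replace (0*0+0*0+0*0+0*0) with 0 by ring. apply sqrt_0. Qed.

Lemma qnorm_add a b : qnorm (qadd a b) <= qnorm a + qnorm b.
Proof.
  destruct a as [a0 a1 a2 a3], b as [b0 b1 b2 b3]; unfold qnorm, qadd; simpl.
  set (Na := a0*a0+a1*a1+a2*a2+a3*a3). set (Nb := b0*b0+b1*b1+b2*b2+b3*b3).
  set (d := a0*b0+a1*b1+a2*b2+a3*b3).
  assert (hNa : 0 <= Na) by (unfold Na; nra). assert (hNb : 0 <= Nb) by (unfold Nb; nra).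
  assert (hd : d <= sqrt Na * sqrt Nb).
  { destruct (Rle_or_lt d 0). - pose proof (Rmult_le_pos _ _ (sqrt_pos Na) (sqrt_pos Nb)); lra.
    - rewrite <- sqrt_mult_alt by auto. rewrite <- (sqrt_square d) at 1 by lra.
      apply sqrt_le_1_alt. 
      assert (Na * Nb - d * d = (a0*b1-a1*b0)^2 + (a0*b2-a2*b0)^2 + (a0*b3-a3*b0)^2
         + (a1*b2-a2*b1)^2 + (a1*b3-a3*b1)^2 + (a2*b3-a3*b2)^2) by (unfold Na, Nb, d; ring).
      assert (0 <= (a0*b1-a1*b0)^2 + (a0*b2-a2*b0)^2 + (a0*b3-a3*b0)^2
         + (a1*b2-a2*b1)^2 + (a1*b3-a3*b1)^2 + (a2*b3-a3*b2)^2)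
        by (repeat apply Rplus_le_le_0_compat; apply pow2_ge_0).
      lra. }
  pose proof (sqrt_pos Na); pose proof (sqrt_pos Nb).
  rewrite <- (sqrt_square (sqrt Na + sqrt Nb)) by lra.
  apply sqrt_le_1_alt.
  pose proof (sqrt_sqrt Na hNa); pose proof (sqrt_sqrt Nb hNb).
  assert ((a0+b0)*(a0+b0)+(a1+b1)*(a1+b1)+(a2+b2)*(a2+b2)+(a3+b3)*(a3+b3) = Na + Nb + 2*d)
    by (unfold Na, Nb, d; ring).
  nra.
Qed.

Lemma qcomp_le x : Rabs (q0 x) <= qnorm x /\ Rabs (q1 x) <= qnorm x /\
                   Rabs (q2 x) <= qnorm x /\ Rabs (q3 x) <= qnorm x.
Proof.
  destruct x as [a b c d]; unfold qnorm; simpl.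
  repeat split; rewrite <- sqrt_Rsqr_abs; apply sqrt_le_1_alt; unfold Rsqr; nra.
Qed.

Lemma qnorm_le_abs x : qnorm x <= Rabs (q0 x) + Rabs (q1 x) + Rabs (q2 x) + Rabs (q3 x).
Proof.
  destruct x as [a b c d]; unfold qnorm; simpl.
  pose proof (Rabs_pos a); pose proof (Rabs_pos b); pose proof (Rabs_pos c); pose proof (Rabs_pos d).
  rewrite <- (sqrt_square (Rabs a + Rabs b + Rabs c + Rabs d)) by lra.
  apply sqrt_le_1_alt.
  assert (a*a = Rabs a * Rabs a) by (rewrite <- Rabs_mult; rewrite Rabs_pos_eq; nra).
  assert (b*b = Rabs b * Rabs b) by (rewrite <- Rabs_mult; rewrite Rabs_pos_eq; nra).
  assert (c*c = Rabs c * Rabs c) by (rewrite <- Rabs_mult; rewrite Rabs_pos_eq; nra).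
  assert (d*d = Rabs d * Rabs d) by (rewrite <- Rabs_mult; rewrite Rabs_pos_eq; nra).
  nra.
Qed.

Lemma lsum_app y F G : lsum y (F ++ G) = qadd (lsum y F) (lsum y G).
Proof. induction F; simpl. - rewrite qadd_0_l; auto. - rewrite IHF, qadd_assoc; auto. Qed.
Lemma lprod_app y F G : lprod y (F ++ G) = qmul (lprod y F) (lprod y G).
Proof. induction F; simpl. - rewrite qmul_1_l; auto. - rewrite IHF, qmul_assoc; auto. Qed.
Lemma lsum_single y n : lsum y (n :: nil) = y n.
Proof. simpl; apply qadd_0_r. Qed.

Lemma lsum_ext y y' F : (forall i, In i F -> y i = y' i) -> lsum y F = lsum y' F.
Proof. induction F; simpl; intros h; auto. rewrite h, IHF; auto. Qed.
Lemma lprod_ext y y' F : (forall i, In i F -> y i = y' i) -> lprod y F = lprod y' F.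
Proof. induction F; simpl; intros h; auto. rewrite h, IHF; auto. Qed.

Lemma list_max_In F : F <> nil -> In (list_max F) F.
Proof.
  induction F as [|a F IH]; intros h; [congruence|]. simpl.
  destruct F as [|b F'].
  - simpl. left. lia.
  - destruct (Nat.max_spec a (list_max (b :: F'))) as [[_ e]|[_ e]]; rewrite e.
    + right; apply IH; discriminate.
    + left; auto.
Qed.

Lemma In_le_max F i : In i F -> (i <= list_max F)%nat.
Proof.
  intros h. assert (H := proj1 (list_max_le F (list_max F)) (le_n _)).
  rewrite Forall_forall in H; auto.
Qed.

Lemma decomp_max (F : list nat) : fin_ne F ->
  exists l1 l2, F = l1 ++ list_max F :: l2 /\ NoDup (l1 ++ l2) /\
   (forall i, In i (l1 ++ l2) -> (i < list_max F)%nat) /\ (length (l1 ++ l2) < length F)%nat.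
Proof.
  intros [ne nd]. destruct (in_split _ _ (list_max_In F ne)) as [l1 [l2 e]].
  exists l1, l2. split; auto.
  assert (nd' := nd). rewrite e in nd'.
  split; [eapply NoDup_remove_1; eauto|].
  split.
  - intros i hi. assert (i <> list_max F).
    { intro ei; subst i. apply (NoDup_remove_2 _ _ _ nd'); auto. }
    assert (i <= list_max F)%nat; [|lia]. apply In_le_max. rewrite e.
    apply in_app_or in hi; apply in_or_app; simpl; tauto.
  - rewrite e, !length_app; simpl; lia.
Qed.

Lemma lsum_decomp y l1 n l2 : lsum y (l1 ++ n :: l2) = qadd (lsum y (l1 ++ l2)) (y n).
Proof.
  rewrite !lsum_app; simpl. rewrite qadd_assoc. f_equal.
  rewrite qadd_comm. reflexivity.
Qed.

Fixpoint allLists (n k : nat) : list (list nat) :=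
  match k with
  | O => nil :: nil
  | S k' => nil :: flat_map (fun i => map (cons i) (allLists n k')) (seq 0 n)
  end.

Lemma allLists_complete n k F : (forall i, In i F -> (i < n)%nat) -> (length F <= k)%nat ->
  In F (allLists n k).
Proof.
  revert F; induction k as [|k IH]; intros F h l.
  - destruct F; simpl in *; [auto|lia].
  - destruct F as [|a F]; simpl; [auto|right].
    apply in_flat_map. exists a; split.
    + apply in_seq. assert (a < n)%nat by (apply h; simpl; auto). lia.
    + apply in_map. apply IH; [intros; apply h; simpl; auto|simpl in l; lia].
Qed.

Lemma allLists_bound n k F : In F (allLists n k) -> forall i, In i F -> (i < n)%nat.
Proof.
  revert F; induction k as [|k IH]; intros F h i hi; simpl in h.
  - destruct h as [e|[]]; subst; destruct hi.
  - destruct h as [e|h]; [subst; destruct hi|].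
    apply in_flat_map in h. destruct h as [a [ha hF]]. apply in_map_iff in hF.
    destruct hF as [G [eG hG]]. subst F. destruct hi as [e|hi].
    + subst; apply in_seq in ha; lia.
    + eapply IH; eauto.
Qed.

Lemma nodup_in_all n F : NoDup F -> (forall i, In i F -> (i < n)%nat) -> In F (allLists n n).
Proof.
  intros nd h. apply allLists_complete; auto.
  assert (L : (length F <= length (seq 0 n))%nat).
  { apply NoDup_incl_length; auto. intros i hi; apply in_seq. specialize (h i hi). lia. }
  rewrite length_seq in L; exact L.
Qed.

Lemma qadd_cancel_opp : forall u v, v = qadd (qadd u v) (qopp u).
Proof. intros u v. destruct u, v. unfold qadd, qopp; simpl. f_equal; ring. Qed.

Fixpoint sumR (a : nat -> R) (n : nat) : R :=
  match n with O => 0 | S m => sumR a m + a m end.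

Lemma half_pow_pos n : 0 < (1/2)^n.
Proof. apply pow_lt; lra. Qed.

Lemma real_geo (a : nat -> R) : (forall n, Rabs (a n) <= (1/2)^n) ->
  exists l, forall eps, 0 < eps -> exists N, forall n, (N <= n)%nat -> Rabs (sumR a n - l) < eps.
Proof.
  intros ha.
  assert (tail : forall n m, Rabs (sumR a (n+m) - sumR a n) <= 2*(1/2)^n - 2*(1/2)^(n+m)).
  { intros n m; induction m as [|m IH].
    - rewrite Nat.add_0_r. replace (sumR a n - sumR a n) with 0 by ring. rewrite Rabs_R0. lra.
    - rewrite Nat.add_succ_r. simpl sumR.
      replace (sumR a (n+m)%nat + a (n+m)%nat - sumR a n) with ((sumR a (n+m)%nat - sumR a n) + a (n+m)%nat) by ring.
      eapply Rle_trans; [apply Rabs_triang|]. pose proof (half_pow_pos n). specialize (ha (n+m)%nat).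
      simpl pow. lra. }
  assert (C : Cauchy_crit (sumR a)).
  { intros eps heps.
    destruct (pow_lt_1_zero (1/2) ltac:(rewrite Rabs_pos_eq; lra) (eps/4) ltac:(lra)) as [N hN].
    exists N. intros n m hn hm. unfold Rdist.
    specialize (hN N (le_n _)). rewrite Rabs_pos_eq in hN by (apply Rlt_le, half_pow_pos).
    pose proof (tail N (n - N)%nat) as t1. pose proof (tail N (m - N)%nat) as t2.
    replace (N + (n - N))%nat with n in t1 by lia. replace (N + (m - N))%nat with m in t2 by lia.
    pose proof (half_pow_pos n); pose proof (half_pow_pos m).
    replace (sumR a n - sumR a m) with ((sumR a n - sumR a N) - (sumR a m - sumR a N)) by ring.
    eapply Rle_lt_trans; [apply Rabs_triang|]. rewrite Rabs_Ropp. lra. }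
  destruct (R_complete _ C) as [l hl]. exists l. intros eps heps.
  destruct (hl eps heps) as [N hN]. exists N. intros n hn. apply hN. lia.
Qed.

Lemma psum_comp w n :
  q0 (psum w n) = sumR (fun k => q0 (w k)) n /\ q1 (psum w n) = sumR (fun k => q1 (w k)) n /\
  q2 (psum w n) = sumR (fun k => q2 (w k)) n /\ q3 (psum w n) = sumR (fun k => q3 (w k)) n.
Proof.
  induction n as [|n IH]; simpl; [repeat split; reflexivity|].
  destruct IH as [e0 [e1 [e2 e3]]]. rewrite e0, e1, e2, e3. repeat split; reflexivity.
Qed.

Lemma geo_cvg w : (forall n, qnorm (w n) <= (1/2)^n) -> series_cvg w.
Proof.
  intros hw.
  destruct (real_geo (fun k => q0 (w k))) as [l0 h0]; [intro n; eapply Rle_trans; [apply qcomp_le|apply hw]|].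
  destruct (real_geo (fun k => q1 (w k))) as [l1 h1]; [intro n; eapply Rle_trans; [apply qcomp_le|apply hw]|].
  destruct (real_geo (fun k => q2 (w k))) as [l2 h2]; [intro n; eapply Rle_trans; [apply qcomp_le|apply hw]|].
  destruct (real_geo (fun k => q3 (w k))) as [l3 h3]; [intro n; eapply Rle_trans; [apply qcomp_le|apply hw]|].
  exists (Quat l0 l1 l2 l3). intros eps heps.
  destruct (h0 (eps/4) ltac:(lra)) as [N0 H0].
  destruct (h1 (eps/4) ltac:(lra)) as [N1 H1].
  destruct (h2 (eps/4) ltac:(lra)) as [N2 H2].
  destruct (h3 (eps/4) ltac:(lra)) as [N3 H3].
  exists (N0 + N1 + N2 + N3)%nat. intros n hn.
  eapply Rle_lt_trans; [apply qnorm_le_abs|].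
  destruct (psum_comp w n) as [e0 [e1 [e2 e3]]].
  unfold qsub, qadd, qopp; simpl. rewrite e0, e1, e2, e3.
  specialize (H0 n ltac:(lia)); specialize (H1 n ltac:(lia));
  specialize (H2 n ltac:(lia)); specialize (H3 n ltac:(lia)).
  unfold Rminus in *. lra.
Qed.

Lemma half_pow_le1 n : (1/2)^n <= 1.
Proof. induction n as [|n IH]; simpl; [lra|]. pose proof (half_pow_pos n). lra. Qed.

Definition FSt (x : nat -> quat) (m : nat) : quat -> Prop :=
  fun c => exists H, fin_ne H /\ (forall i, In i H -> (m <= i)%nat) /\ c = lsum x H.

Lemma plist {X : Type} (p : (quat -> Prop) -> Prop) (L : list X) (P : X -> quat -> Prop) :
  isFilter p -> (forall F, In F L -> p (P F)) -> p (fun c => forall F, In F L -> P F c).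
Proof.
  intros Fp; induction L as [|a L IH]; intros h.
  - apply (fS p (fun _ => True)); [exact Fp| |apply fT; exact Fp]. intros c _ F [].
  - eapply fS; [exact Fp| |apply (fI p _ _ Fp (h a (or_introl eq_refl)) (IH (fun F hF => h F (or_intror hF))))].
    intros c [h1 h2] F [e|hF]; [subst; auto|auto].
Qed.

Definition bnd (k : nat) (f : nat -> quat * list nat) : nat :=
  match k with O => O | S j => S (list_max (snd (f j))) end.

Definition nextc (Good : nat -> (nat -> quat) -> nat -> quat * list nat -> Prop) n yp m :=
  epsilon (inhabits (qzero, @nil nat)) (Good n yp m).

Fixpoint st Good (n : nat) : nat -> quat * list nat :=
  match n with
  | O => fun _ => (qzero, nil)
  | S k => let f := st Good k in
           let r := nextc Good k (fun i => fst (f i)) (bnd k f) in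
           fun i => if Nat.eqb i k then r else f i
  end.

Lemma st_stable Good n i : (i < n)%nat -> st Good n i = st Good (S i) i.
Proof.
  induction n as [|n IH]; intros h; [lia|].
  destruct (Nat.eq_dec i n) as [e|ne].
  - subst; reflexivity.
  - simpl. replace (Nat.eqb i n) with false by (symmetry; apply Nat.eqb_neq; auto).
    apply IH; lia.
Qed.

Section GCsec.
Context (x : nat -> quat) (p : (quat -> Prop) -> Prop).
Context (Up : ultra p).
Context (Idem : forall A, conv qadd p p A <-> p A).
Context (HFS : forall m, p (FSt x m)).

Let Fp := ultra_filter p Up.

Definition Est (E : quat -> Prop) c := E c /\ p (fun b => E (qadd c b)).

Lemma Est_in E : p E -> p (Est E).
Proof.
  intros h. unfold Est. apply fI; auto. apply Idem in h. exact h.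
Qed.

Lemma Est_shift E c : Est E c -> p (fun b => Est E (qadd c b)).
Proof.
  intros [h1 h2]. unfold Est. apply fI; auto.
  assert (h3 : p (fun b => p (fun d => E (qadd c (qadd b d))))).
  { apply (proj2 (Idem (fun e => E (qadd c e)))). exact h2. }
  eapply fS; [exact Fp| |exact h3]. intros b hb.
  eapply fS; [exact Fp| |exact hb]. intros d hd. rewrite qadd_assoc; exact hd.
Qed.

Definition SumC E n (yp : nat -> quat) c :=
  forall F, In F (allLists n n) -> NoDup F -> F <> nil -> Est E (lsum yp F) -> Est E (qadd (lsum yp F) c).

Definition GoodP E (Ex : nat -> (nat -> quat) -> quat -> Prop) n yp m (r : quat * list nat) :=
  fin_ne (snd r) /\ (forall i, In i (snd r) -> (m <= i)%nat) /\ fst r = lsum x (snd r) /\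
  Est E (fst r) /\ Ex n yp (fst r) /\ SumC E n yp (fst r).

Lemma GC (E : quat -> Prop) (Ex : nat -> (nat -> quat) -> quat -> Prop) :
  p E -> (forall n yp, p (Ex n yp)) ->
  (forall n yp yp' c, (forall i, (i < n)%nat -> yp i = yp' i) -> Ex n yp c -> Ex n yp' c) ->
  exists y, sum_subsystem y x /\ (forall F, fin_ne F -> E (lsum y F)) /\ (forall n, Ex n y (y n)).
Proof.
  intros pE pEx Excong.
  set (Good := GoodP E Ex).
  assert (exi : forall n yp m, exists r, Good n yp m r).
  { intros n yp m.
    assert (hp : p (fun c => FSt x m c /\ Est E c /\ Ex n yp c /\ SumC E n yp c)).
    { apply fI; auto. apply fI; auto. apply Est_in; auto. apply fI; auto.
      unfold SumC. apply plist; auto. intros F _.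
      destruct (classic (NoDup F /\ F <> nil /\ Est E (lsum yp F))) as [[a [b c]]|nc].
      - eapply fS; [exact Fp| |apply (Est_shift E _ c)]. intros d hd _ _ _; exact hd.
      - apply (fS p (fun _ => True)); [exact Fp| |apply fT; exact Fp]. intros d _ a b c; exfalso; tauto. }
    destruct (ultra_ex p _ Up hp) as [c [[H [h1 [h2 h3]]] [h4 [h5 h6]]]].
    exists (c, H). unfold Good, GoodP; simpl. split; [exact h1|split; [exact h2|split; [exact h3|split; [exact h4|split; [exact h5|exact h6]]]]]. }
  set (f := st Good).
  set (y := fun i => fst (f (S i) i)). set (H := fun i => snd (f (S i) i)).
  assert (good : forall i, Good i (fun j => fst (f i j)) (bnd i (f i)) (f (S i) i)).
  { intros i. unfold f; simpl. rewrite Nat.eqb_refl. unfold nextc.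
    apply epsilon_spec. apply exi. }
  assert (agree : forall i j, (j < i)%nat -> fst (f i j) = y j).
  { intros i j h. unfold y, f. rewrite (st_stable Good i j h). reflexivity. }
  exists y.
  assert (Hy : forall n, Est E (y n) /\ Ex n y (y n) /\ SumC E n y (y n)).
  { intros n. destruct (good n) as [_ [_ [_ [g4 [g5 g6]]]]].
    split; [exact g4|split].
    - eapply Excong; [|exact g5]. intros i hi. apply agree; auto.
    - intros F hF nd ne hE.
      assert (eL : lsum (fun j => fst (f n j)) F = lsum y F)
        by (apply lsum_ext; intros i hi; apply agree; eapply allLists_bound; eauto).
      unfold SumC in g6. specialize (g6 F hF nd ne). rewrite eL in g6. apply g6; auto. }
  split; [|split].
  - exists H. split; [|split].
    + intros n. destruct (good n) as [g _]. exact g.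
    + intros n a b ha hb.
      destruct (good (S n)) as [_ [g2 _]]. specialize (g2 b hb).
      unfold bnd in g2. unfold H in ha.
      assert (hm : (a <= list_max (snd (f (S n) n)))%nat) by (apply In_le_max; auto).
      change (S (list_max (snd (f (S n) n))) <= b)%nat in g2. lia.
    + intros n. destruct (good n) as [_ [_ [g3 _]]]. exact g3.
  - assert (key : forall k F, (length F <= k)%nat -> fin_ne F -> Est E (lsum y F)).
    { induction k as [|k IH]; intros F hl hF.
      - destruct F; [destruct hF; congruence|simpl in hl; lia].
      - destruct (decomp_max F hF) as [l1 [l2 [e [nd [lt ln]]]]].
        set (n := list_max F) in *. rewrite e, lsum_decomp.
        destruct (Hy n) as [s1 [_ s3]].
        destruct (l1 ++ l2) as [|a l] eqn:el.
        + simpl. rewrite qadd_0_l. exact s1.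
        + rewrite <- el in *. apply s3; auto.
          * apply nodup_in_all; auto.
          * rewrite el; discriminate.
          * apply IH; [lia|split; auto; rewrite el; discriminate]. }
    intros F hF. apply (key (length F) F (le_n _) hF).
  - intros n. apply Hy.
Qed.

End GCsec.

Lemma qnorm_opp a : qnorm (qopp a) = qnorm a.
Proof. unfold qnorm, qopp; simpl. f_equal. ring. Qed.

Lemma x_small (x : nat -> quat) : series_cvg_to x qzero ->
  forall e m, 0 < e -> exists n, (m <= n)%nat /\ qnorm (x n) < e.
Proof.
  intros hc e m he. destruct (hc (e/2) ltac:(lra)) as [N hN].
  exists (N + m)%nat. split; [lia|].
  pose proof (hN (S (N+m)) ltac:(lia)) as h1. pose proof (hN (N+m)%nat ltac:(lia)) as h2.
  rewrite qsub_0 in h1, h2. simpl psum in h1.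
  rewrite (qadd_cancel_opp (psum x (N+m)) (x (N+m)%nat)). eapply Rle_lt_trans; [apply qnorm_add|]. rewrite qnorm_opp. lra.
Qed.

Lemma FSt_mono x m m' c : (m <= m')%nat -> FSt x m' c -> FSt x m c.
Proof. intros h [H [a [b e]]]. exists H; split; [exact a|split; [|exact e]]. intros i hi; specialize (b i hi); lia. Qed.

Definition F0 (S : quat -> Prop) x : (quat -> Prop) -> Prop :=
  fun A => exists e m, 0 < e /\ forall c, S c -> qnorm c < e -> FSt x m c -> A c.

Lemma F0_proper S x : (forall n, S (x n)) -> series_cvg_to x qzero -> proper (F0 S x).
Proof.
  intros xS hc. split; [split; [|split]|].
  - exists 1, O. split; [lra|auto].
  - intros A B [e1 [m1 [he1 h1]]] [e2 [m2 [he2 h2]]].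
    exists (Rmin e1 e2), (m1 + m2)%nat. split; [apply Rmin_pos; auto|].
    intros c sc nc fc. pose proof (Rmin_l e1 e2); pose proof (Rmin_r e1 e2). split.
    + apply h1; auto; [lra|]. eapply FSt_mono; [|exact fc]; lia.
    + apply h2; auto; [lra|]. eapply FSt_mono; [|exact fc]; lia.
  - intros A B AB [e [m [he h]]]. exists e, m; split; auto.
  - intros [e [m [he h]]]. destruct (x_small x hc e m he) as [n [hn hx]].
    apply (h (x n)); auto. exists (n :: nil). split; [split; [discriminate|constructor; [auto|constructor]]|].
    split; [intros i [e'|[]]; subst; auto|]. rewrite lsum_single; auto.
Qed.

Lemma F0_semi S x : add_subsemigroup S -> semi qadd (F0 S x).
Proof.
  intros addS p q Up Uq sp sq A [e [m [he h]]].
  unfold conv.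
  assert (p1 : p (fun a => S a /\ qnorm a < e/2 /\ FSt x m a)).
  { apply sp. exists (e/2), m. split; [lra|]. auto. }
  eapply fS; [apply ultra_filter; exact Up| |exact p1].
  intros a [sa [na [Ha [[neHa ndHa] [gHa ea]]]]].
  set (m' := (m + list_max Ha + 1)%nat).
  assert (q1 : q (fun b => S b /\ qnorm b < e/2 /\ FSt x m' b)).
  { apply sq. exists (e/2), m'. split; [lra|]. auto. }
  eapply fS; [apply ultra_filter; exact Uq| |exact q1].
  intros b [sb [nb [Hb [[neHb ndHb] [gHb eb]]]]].
  apply h.
  - apply addS; auto.
  - eapply Rle_lt_trans; [apply qnorm_add|]. lra.
  - exists (Ha ++ Hb). split; [split|split].
    + destruct Ha; [congruence|discriminate].
    + apply NoDup_app; auto. intros i hi hi'. specialize (gHb i hi').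
      pose proof (In_le_max Ha i hi). unfold m' in gHb. unfold m' in gHb. lia.
    + intros i hi. apply in_app_or in hi. destruct hi as [hi|hi]; [auto|].
      specialize (gHb i hi). unfold m' in gHb. lia.
    + rewrite lsum_app, ea, eb; reflexivity.
Qed.

Definition good (S : quat -> Prop) a := a = qone \/ (S a /\ qnorm a < 1 /\ a <> qzero).

Lemma good_norm S a : good S a -> qnorm a <= 1.
Proof. intros [e|[_ [h _]]]; [subst; rewrite qnorm_one; lra|lra]. Qed.

Lemma good_one S : good S qone. Proof. left; auto. Qed.

Lemma good_mul S a c : mul_subsemigroup_ball S -> good S a -> good S c -> good S (qmul a c).
Proof.
  intros mulS [ea|[sa [na za]]] [ec|[sc [nc zc]]].
  - subst; left; apply qmul_1_l.
  - subst; rewrite qmul_1_l; right; auto.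
  - subst; rewrite qmul_1_r; right; auto.
  - right. apply mulS; auto.
Qed.

Lemma mid_S S a b c : mul_subsemigroup_ball S -> good S a -> good S b -> S c -> qnorm c < 1 ->
  S (qmul (qmul a c) b).
Proof.
  intros mulS ga gb sc nc.
  destruct (classic (c = qzero)) as [e|ne].
  - subst. rewrite qmul_0_r, qmul_0_l; auto.
  - assert (g : good S (qmul (qmul a c) b)).
    { apply good_mul; auto. apply good_mul; auto. right; auto. }
    destruct g as [e|[h _]]; auto.
    exfalso. (* a c b = 1 impossible: norm < 1 *)
    assert (hn : qnorm (qmul (qmul a c) b) < 1).
    { rewrite !qnorm_mul. pose proof (good_norm S a ga); pose proof (good_norm S b gb).
      pose proof (qnorm_ge0 a); pose proof (qnorm_ge0 b); pose proof (qnorm_ge0 c).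
      assert (qnorm a * qnorm c <= 1 * qnorm c) by (apply Rmult_le_compat_r; lra).
      assert (qnorm a * qnorm c * qnorm b <= qnorm a * qnorm c * 1)
        by (apply Rmult_le_compat_l; [apply Rmult_le_pos|]; lra). lra. }
    rewrite e, qnorm_one in hn. lra.
Qed.

Lemma lsum_mid z a b F : lsum (fun n => qmul (qmul a (z n)) b) F = qmul (qmul a (lsum z F)) b.
Proof.
  induction F as [|i F IH]; simpl.
  - rewrite qmul_0_r, qmul_0_l; reflexivity.
  - rewrite IH, qmul_add_l, qmul_add_r; reflexivity.
Qed.

Theorem theorem2p5 (S : quat -> Prop) (x : nat -> quat) (A : quat -> Prop) :
  qdense S ->
  add_subsemigroup S ->
  mul_subsemigroup_ball S ->
  (forall n, S (x n)) ->
  series_cvg_to x qzero ->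
  IPstar_near0 S A ->
  exists y : nat -> quat,
    sum_subsystem y x /\
    qsubset (fun a => FS y a \/ FP y a) A.
Proof.
  intros _ addS mulS xS hc IPs.
  destruct (idempotent qadd qadd_assoc (F0 S x) (F0_proper S x xS hc) (F0_semi S x addS))
    as [p [Up [sF Idem]]].
  pose proof (ultra_filter p Up) as Fp.
  assert (pB : forall e, 0 < e -> p (fun c => S c /\ qnorm c < e)).
  { intros e he. apply sF. exists e, O. split; auto. }
  assert (pF : forall m, p (FSt x m)).
  { intros m. apply sF. exists 1, m. split; [lra|auto]. }
  assert (GG : forall E, p E -> exists z, (forall n, S (z n) /\ qnorm (z n) < (1/2)^n) /\
                                  forall F, fin_ne F -> E (lsum z F)).
  { intros E pE.
    destruct (GC x p Up Idem pF E (fun n _ c => S c /\ qnorm c < (1/2)^n) pE) as [z [_ [h1 h2]]].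
    - intros n _. apply pB. apply half_pow_pos.
    - intros n yp yp' c _ h; exact h.
    - exists z; split; auto. }
  assert (Qmem : forall a b, good S a -> good S b -> p (fun c => A (qmul (qmul a c) b))).
  { intros a b ga gb. apply NNPP; intro nQ. apply ultra_not in nQ; auto.
    assert (pE : p (fun c => ~ A (qmul (qmul a c) b) /\ (S c /\ qnorm c < 1))).
    { apply fI; auto. apply pB; lra. }
    destruct (GG _ pE) as [z [hz hFS]].
    set (w := fun n => qmul (qmul a (z n)) b).
    assert (IPw : IP_near0 S (FS w)).
    { split.
      - intros c [F [hF e]]. subst c. unfold w. rewrite lsum_mid.
        destruct (hFS F hF) as [_ [s1 s2]]. apply mid_S; auto.
      - exists w. split; [|split].
        + intros n. destruct (hz n) as [s1 s2]. apply mid_S; auto.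
          pose proof (half_pow_le1 n). lra.
        + apply geo_cvg. intros n. unfold w. rewrite !qnorm_mul.
          destruct (hz n) as [_ s2].
          pose proof (good_norm S a ga); pose proof (good_norm S b gb).
          pose proof (qnorm_ge0 a); pose proof (qnorm_ge0 b); pose proof (qnorm_ge0 (z n)).
          assert (qnorm a * qnorm (z n) <= 1 * qnorm (z n)) by (apply Rmult_le_compat_r; lra).
          assert (qnorm a * qnorm (z n) * qnorm b <= qnorm a * qnorm (z n) * 1)
            by (apply Rmult_le_compat_l; [apply Rmult_le_pos|]; lra). lra.
        + intros c h; exact h. }
    destruct (proj2 IPs (FS w) IPw) as [_ [z' [_ [_ hsub]]]].
    assert (h0 : FS z' (lsum z' (O :: nil))).
    { exists (O :: nil). split; auto. split; [discriminate|constructor; [auto|constructor]]. }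
    destruct (hsub _ h0) as [[F [hF e]] hA]. rewrite e in hA. unfold w in hA.
    rewrite lsum_mid in hA. destruct (hFS F hF) as [nA _]. contradiction. }
  assert (pA : p A).
  { eapply fS; [exact Fp| |exact (Qmem qone qone (good_one S) (good_one S))].
    intros c h. cbv beta in h. rewrite qmul_1_l, qmul_1_r in h. exact h. }
  set (Zc := p (fun c => c = qzero)).
  assert (Z1 : Zc -> forall B, p B -> B qzero).
  { intros hz B hB. destruct (ultra_ex p _ Up (fI p _ _ Fp hz hB)) as [c [e h]]. subst; auto. }
  assert (Z2 : Zc -> forall B : quat -> Prop, B qzero -> p B).
  { intros hz B hB. eapply fS; [exact Fp| |exact hz]. intros c e; cbv beta in e; subst c; exact hB. }
  set (ExM := fun n (yp : nat -> quat) c =>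
     S c /\ qnorm c < 1 /\ (~ Zc -> c <> qzero) /\
     forall F1, In F1 (allLists n n) -> forall F2, In F2 (allLists n n) ->
       (Zc \/ (good S (lprod yp F1) /\ good S (lprod yp F2))) ->
       A (qmul (qmul (lprod yp F1) c) (lprod yp F2))).
  destruct (GC x p Up Idem pF A ExM pA) as [y [hsub [hFS hEx]]].
  - intros n yp. unfold ExM. apply fI; auto.
    { eapply fS; [exact Fp| |apply (pB 1); lra]. intros c [h _]; exact h. }
    apply fI; auto.
    { eapply fS; [exact Fp| |apply (pB 1); lra]. intros c [_ h]; exact h. }
    apply fI; auto.
    + destruct (classic Zc) as [hz|hz].
      * apply (fS p (fun _ => True)); [exact Fp|intros c _ h; contradiction|apply fT; exact Fp].
      * apply ultra_not in hz; auto. eapply fS; [exact Fp| |exact hz].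
        intros c h _ e; apply h; exact e.
    + apply plist; auto. intros F1 _.
      apply plist; auto. intros F2 _.
      destruct (classic Zc) as [hz|hz].
      * apply Z2; auto. intros _. rewrite qmul_0_r, qmul_0_l. apply Z1; auto.
      * destruct (classic (good S (lprod yp F1) /\ good S (lprod yp F2))) as [[g1 g2]|ng].
        -- eapply fS; [exact Fp| |exact (Qmem _ _ g1 g2)]. intros c h _; exact h.
        -- apply (fS p (fun _ => True)); [exact Fp| |apply fT; exact Fp].
           intros c _ [h|h]; contradiction.
  - intros n yp yp' c agr [h1 [h2 [h3 h4]]]. split; [auto|split; [auto|split; [auto|]]].
    intros F1 i1 F2 i2.
    assert (e1 : lprod yp F1 = lprod yp' F1)
      by (apply lprod_ext; intros i hi; apply agr; exact (allLists_bound n n F1 i1 i hi)).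
    assert (e2 : lprod yp F2 = lprod yp' F2)
      by (apply lprod_ext; intros i hi; apply agr; exact (allLists_bound n n F2 i2 i hi)).
    rewrite <- e1, <- e2. apply h4; auto.
  - exists y. split; auto.
    intros c [[F [hF e]]|[F [hF e]]]; subst c; [apply hFS; auto|].
    assert (gp : ~ Zc -> forall G, good S (lprod y G)).
    { intros nz G; induction G as [|i G IH]; simpl; [apply good_one|].
      apply good_mul; auto. right. destruct (hEx i) as [s1 [s2 [s3 _]]]. auto. }
    destruct (decomp_max F hF) as [l1 [l2 [e [nd [lt ln]]]]].
    set (n := list_max F) in *. rewrite e, lprod_app. simpl lprod. rewrite <- qmul_assoc.
    destruct (hEx n) as [_ [_ [_ h4]]]. apply h4.
    + apply nodup_in_all; [eapply NoDup_app_remove_r; eauto|].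
      intros i hi; apply lt; apply in_or_app; auto.
    + apply nodup_in_all; [eapply NoDup_app_remove_l; eauto|].
      intros i hi; apply lt; apply in_or_app; auto.
    + destruct (classic Zc) as [hz|hz]; [left; auto|right; split; apply gp; auto].
Qed.
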